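(* Let $\mathscr{A}\in\mathbb{R}^{n\times n\times n_3}$, $\mathscr{V}\in\mathbb{R}^{n\times s\times n_3}$, and suppose $m$ steps of the tensor tubal-global Arnoldi process described in the context have been run (without breakdown). Then the tensors $\mathscr{V}_1,\dots,\mathscr{V}_m$ form a T-orthonormal basis of the tubal-global Krylov subspace $\mathscr{TK}^g_m(\mathscr{A},\mathscr{V})$.
   Context: All tensors are real third-order arrays. $\widehat{\mathscr{A}}=\mathscr{A}\times_3F_{n_3}$ denotes the tensor obtained by applying the discrete Fourier transform ($F_{n_3}$ with entries $\omega^{(i-1)(j-1)}$, $\omega=e^{-2\pi\mathrm{i}/n_3}$) to each tube; its frontal slices $\hat A^{(k)}$ are the Fourier slices. T-product: $\mathscr{A}\star\mathscr{B}$ has Fourier slices $\hat A^{(k)}\hat B^{(k)}$; $\mathscr{A}^0$ is the identity tensor (first frontal slice $I_n$, others zero) and $\mathscr{A}^{i}=\mathscr{A}\star\mathscr{A}^{i-1}$. Transpose $\mathscr{A}^T$: transpose each frontal slice and reverse the order of frontal slices $2,\dots,n_3$. A tube is an element of $\mathbb{R}^{1\times1\times n_3}$; $\mathbf{e}$ is the tube with entries $(1,0,\dots,0)$ and $\mathbf{o}$ the zero tube. For a tube $\mathbf{a}$, $\mathbf{a}\divideontimes\mathscr{B}$ is the tensor whose $(i,j)$ tube is $\mathbf{a}\star\mathscr{B}(i,j,:)$. T-trace: the tube whose $k$-th Fourier slice is the trace of the $k$-th Fourier slice. Tubal inner product: $\langle\mathscr{X},\mathscr{Y}\rangle_T=\text{T-trace}(\mathscr{X}^T\star\mathscr{Y})$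 for $\mathscr{X},\mathscr{Y}\in\mathbb{R}^{n\times s\times n_3}$. A family $\mathscr{V}_1,\dots,\mathscr{V}_m$ is T-orthonormal if $\langle\mathscr{V}_i,\mathscr{V}_j\rangle_T=\mathbf{e}$ for $i=j$ and $\mathbf{o}$ for $i\ne j$. Tubal-global Krylov subspace: $\mathscr{TK}^g_m(\mathscr{A},\mathscr{V})=\{\sum_{i=1}^m\mathbf{a}_i\divideontimes(\mathscr{A}^{i-1}\star\mathscr{V}):\ \mathbf{a}_i\in\mathbb{R}^{1\times1\times n_3}\}$. Normalization of $\mathscr{W}$: $\mathbf{a}$ is the tube whose $k$-th Fourier coefficient is $\|\hat W^{(k)}\|_F$ (breakdown if one is zero), and $\mathscr{Q}$ has Fourier slices $\hat W^{(k)}/\|\hat W^{(k)}\|_F$; output $[\mathscr{Q},\mathbf{a}]$. Tubal-global Arnoldi process: $[\mathscr{V}_1,\mathbf{r}_{1,1}]=\mathrm{Normalization}(\mathscr{V})$; for $j=1,\dots,m$: $\mathscr{W}=\mathscr{A}\star\mathscr{V}_j$; for $i=1,\dots,j$: $\mathbf{h}_{i,j}=\langle\mathscr{V}_i,\mathscr{W}\rangle_T$, $\mathscr{W}\leftarrow\mathscr{W}-\mathbf{h}_{i,j}\divideontimes\mathscr{V}_i$; then $[\mathscr{V}_{j+1},\mathbf{h}_{j+1,j}]=\mathrm{Normalization}(\mathscr{W})$. *)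

(* Defs.v *)
From HB Require Import structures.
From mathcomp Require Import all_boot all_order all_algebra.
From mathcomp Require Import reals trigo.
From mathcomp Require Import complex.
Set Implicit Arguments.
Unset Strict Implicit.
Unset Printing Implicit Defensive.
Import GRing.Theory Num.Theory.
Local Open Scope ring_scope.

Section TubalGlobal.
Variable R : realType.
Local Notation C := R[i].

(* A real third-order tensor in R^{m x p x q}, stored by frontal slices
   (the k-th frontal slice is A k : 'M_(m,p), k : 'I_q). *)
Definition tensor (m p q : nat) := {ffun 'I_q -> 'M[R]_(m, p)}.

Definition tube (q : nat) := tensor 1 1 q.

Definition omega (q : nat) : C :=
  (cos (2 * pi / q%:R) -i* sin (2 * pi / q%:R))%C.

(* Fourier slices: hat A^(k) = sum_j omega^(k j) A^(j)  (0-based indices),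
   i.e. A x_3 F_q with (F_q)_{kj} = omega^{(k-1)(j-1)} in 1-based indices. *)
Definition fslice m p q (A : tensor m p q) (k : 'I_q) : 'M[C]_(m, p) :=
  \sum_(j < q) (omega q ^+ (k * j)) *: map_mx (fun x : R => x%:C%C) (A j).

(* The real tensor whose Fourier slices are X k (inverse DFT along tubes;
   X is conjugate-symmetric in all uses below, so the inverse transform is
   real and taking the real part loses nothing). *)
Definition of_fourier m p q (X : 'I_q -> 'M[C]_(m, p)) : tensor m p q :=
  [ffun j : 'I_q => map_mx (@complex.Re R)
     ((q%:R)^-1 *: \sum_(k < q) ((omega q)^-1 ^+ (k * j)) *: X k)].

Definition tprod m n p q (A : tensor m n q) (B : tensor n p q) : tensor m p q :=
  of_fourier (fun k => fslice A k *m fslice B k).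

Definition tid n q : tensor n n q :=
  [ffun k : 'I_q => if val k == 0%N then 1%:M else 0].

Fixpoint tpow n q (A : tensor n n q) (i : nat) : tensor n n q :=
  match i with
  | 0 => tid n q
  | i'.+1 => tprod A (tpow A i')
  end.

Definition trev q (k : 'I_q) : 'I_q :=
  Ordinal (ltn_pmod (q - k) (leq_ltn_trans (leq0n k) (ltn_ord k))).

Definition ttr m p q (A : tensor m p q) : tensor p m q :=
  [ffun k => (A (trev k))^T].

Definition te q : tube q := [ffun k : 'I_q => if val k == 0%N then 1 else 0].
Definition to q : tube q := 0.

Definition ttube m p q (B : tensor m p q) (i : 'I_m) (j : 'I_p) : tube q :=
  [ffun k => (B k i j)%:M].

Definition tscale m p q (a : tube q) (B : tensor m p q) : tensor m p q :=
  [ffun k => \matrix_(i, j) (tprod a (ttube B i j) k) 0 0].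

Definition ttrace n q (A : tensor n n q) : tube q :=
  of_fourier (fun k => (\tr (fslice A k))%:M).

Definition tinner n s q (X Y : tensor n s q) : tube q :=
  ttrace (tprod (ttr X) Y).

Definition fnorm m p (X : 'M[C]_(m, p)) : R :=
  Num.sqrt (\sum_(i < m) \sum_(j < p) ((complex.Re (X i j)) ^+ 2 + (complex.Im (X i j)) ^+ 2)).

Definition no_breakdown m p q (W : tensor m p q) : Prop :=
  forall k : 'I_q, fnorm (fslice W k) != 0.

(* Normalization(W) = [Q, a] *)
Definition normQ m p q (W : tensor m p q) : tensor m p q :=
  of_fourier (fun k => ((fnorm (fslice W k))^-1)%:C%C *: fslice W k).
Definition normA m p q (W : tensor m p q) : tube q :=
  of_fourier (fun k => ((fnorm (fslice W k))%:C%C)%:M).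

Definition in_TKg n s q (m : nat) (A : tensor n n q) (V : tensor n s q)
  (X : tensor n s q) : Prop :=
  exists a : nat -> tube q,
    X = \sum_(1 <= i < m.+1) tscale (a i) (tprod (tpow A i.-1) V).

(* Vs j = V_j, H i j = h_{i,j}, r = r_{1,1} (1-based indices);
   W j i = the tensor W in step j after the first i orthogonalization
   updates (W j 0 = A * V_j). *)
Definition arnoldi_run n s q (m : nat) (A : tensor n n q) (V : tensor n s q)
  (Vs : nat -> tensor n s q) (H : nat -> nat -> tube q) (r : tube q)
  (W : nat -> nat -> tensor n s q) : Prop :=
  [/\ (no_breakdown V /\ Vs 1%N = normQ V /\ r = normA V),
      (forall j, (1 <= j <= m)%N -> W j 0%N = tprod A (Vs j)),
      (forall j i, (1 <= j <= m)%N -> (1 <= i <= j)%N ->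
          H i j = tinner (Vs i) (W j i.-1) /\
          W j i = W j i.-1 - tscale (H i j) (Vs i)) &
      (forall j, (1 <= j <= m)%N ->
          [/\ no_breakdown (W j j), Vs j.+1 = normQ (W j j)
            & H j.+1 j = normA (W j j)])].

End TubalGlobal.

(* Main.v *)
Require Import Defs.
From HB Require Import structures.
From mathcomp Require Import all_boot all_order all_algebra.
From mathcomp Require Import reals.
From mathcomp Require Import trigo complex.
From mathcomp Require Import ring lra.
Import GRing.Theory Num.Theory.
Local Open Scope ring_scope.



Section Omega.
Variable R : realType.
Local Notation C := R[i].

Lemma omegaX q d : omega R q ^+ d =
  (cos (d%:R * (2 * pi / q%:R)) -i* sin (d%:R * (2 * pi / q%:R)))%C.
Proof.
set t := 2 * pi / q%:R.
elim: d => [|d IH]; first by rewrite expr0 mul0r cos0 sin0 oppr0.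
rewrite exprSr IH /omega -/t.
rewrite -[((_ -i* _) * (_ -i* _))%C]/(_ +i* _)%C.
by rewrite -natr1 mulrDl mul1r cosD sinD; congr (_ +i* _)%C; ring.
Qed.

Lemma omega_prim q : (0 < q)%N -> q.-primitive_root (omega R q).
Proof.
move=> q0; rewrite /primitive_root_of_unity q0 /=.
apply/forallP => i; rewrite unity_rootE omegaX.
have qR : q%:R != 0 :> R by rewrite pnatr_eq0 -lt0n.
case: (eqVneq i.+1 q) => [Ei|Ni].
  rewrite Ei mulrC divfK // mulrC mulr_natr cos2pi sin2pi oppr0.
  by rewrite eqxx.
rewrite eqbF_neg; apply/negP => /eqP [Hc Hs].
pose x : R := (i.+1%:R * (2 * pi / q%:R)) / 2.
have Hx : 0 < x < pi.
  have iq : (i.+1 < q)%N by rewrite ltn_neqAle Ni ltn_ord.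
  apply/andP; split.
    by rewrite /x !mulr_gt0 ?invr_gt0 ?ltr0n ?pi_gt0.
  have -> : x = pi * (i.+1%:R / q%:R) by rewrite /x; field.
  by rewrite gtr_pMr ?pi_gt0 // ltr_pdivrMr ?ltr0n // mul1r ltr_nat.
have Hsx := sin_gt0_pi Hx.
have : cos (x *+ 2) = 1.
  by rewrite -mulr_natr /x divfK ?pnatr_eq0.
rewrite cos_mulr2n => h.
have hc : cos x ^+ 2 = 1 by lra.
have := sin2cos2 x; rewrite hc subrr => /eqP; rewrite expf_eq0 /= => /eqP h0.
by rewrite h0 Order.POrderTheory.ltxx in Hsx.
Qed.
End Omega.



Section Fourier.
Variable R : realType.
Local Notation C := R[i].
Variable q : nat.
Local Notation w := (omega R q).

Lemma geo_sum (u : C) : u ^+ q = 1 ->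
  \sum_(k < q) u ^+ k = if u == 1 then q%:R else 0.
Proof.
move=> uq; case: eqP => [->|/eqP u1].
  by rewrite (eq_bigr (fun _ => 1)) ?sumr_const ?card_ord // => i _; rewrite expr1n.
have : (u - 1) * \sum_(k < q) u ^+ k = 0 by rewrite -subrX1 uq subrr.
by move/eqP; rewrite mulf_eq0 subr_eq0 (negbTE u1) => /eqP.
Qed.

Lemma conj_w : (w^*)%C * w = 1.
Proof.
rewrite /omega -[((_ -i* _)^* )%C]/(_ +i* _)%C opprK.
rewrite -[((_ +i* _) * (_ -i* _))%C]/(_ +i* _)%C.
pose c : R := cos (2 * pi / q%:R); pose s : R := sin (2 * pi / q%:R).
have h : c ^+ 2 + s ^+ 2 = 1 by apply: cos2Dsin2.
rewrite -/c -/s.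
apply/eqP; rewrite eq_complex /=; apply/andP; split; apply/eqP.
  by rewrite -h; ring.
by ring.
Qed.

Lemma w_neq0 : w != 0.
Proof. by apply/negP => /eqP h; move: conj_w; rewrite h mulr0 => /eqP; rewrite eq_sym oner_eq0. Qed.

Lemma conj_wE : (w^*)%C = w^-1.
Proof. by apply: (mulIf w_neq0); rewrite conj_w mulVf // w_neq0. Qed.

Lemma conj_wX m : ((w ^+ m)^*)%C = w^-1 ^+ m.
Proof. by rewrite rmorphXn; congr (_ ^+ _); apply: conj_wE. Qed.

Lemma conj_wVX m : (((w^-1) ^+ m)^*)%C = w ^+ m.
Proof. by rewrite rmorphXn; congr (_ ^+ _); rewrite -conj_wE; exact: conjcK. Qed.

Lemma trev_inv (k : 'I_q) : trev (trev k) = k.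
Proof.
apply: val_inj => /=.
have q0 : (0 < q)%N by apply: leq_ltn_trans (ltn_ord k).
case: (posnP k) => [k0|kp].
  by rewrite k0 subn0 modnn subn0 modnn.
rewrite (modn_small (m := q - k)); last by rewrite ltn_subrL kp q0.
by rewrite subKn ?modn_small // ltnW.
Qed.

Lemma trev_inj : injective (@trev q).
Proof. exact: can_inj trev_inv. Qed.

Lemma w_trev (k : 'I_q) j : w ^+ (trev k * j) = w^-1 ^+ (k * j).
Proof.
have q0 : (0 < q)%N by apply: leq_ltn_trans (ltn_ord k).
have hp := @omega_prim R q q0.
apply: (mulIf (expf_neq0 (k * j) w_neq0)).
rewrite -exprMn mulVf ?w_neq0 // expr1n /=.
rewrite exprM (prim_expr_mod hp) -exprM -exprD -mulnDl subnK ?(ltnW (ltn_ord k)) //.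
by rewrite exprM (prim_expr_order hp) expr1n.
Qed.

Lemma fsliceE m p (A : tensor R m p q) k x y :
  fslice A k x y = \sum_(j < q) w ^+ (k * j) * (A j x y)%:C%C.
Proof. by rewrite /fslice summxE; apply: eq_bigr => j _; rewrite !mxE. Qed.

Lemma of_fourierE m p (X : 'I_q -> 'M[C]_(m, p)) j x y :
  of_fourier X j x y = complex.Re ((q%:R)^-1 * \sum_(k < q) w^-1 ^+ (k * j) * X k x y).
Proof.
rewrite /of_fourier ffunE !mxE summxE; congr (complex.Re (_ * _)).
by apply: eq_bigr => k _; rewrite !mxE.
Qed.

Lemma orth (j j' : 'I_q) :
  \sum_(k < q) w^-1 ^+ (k * j) * w ^+ (k * j') = if j == j' then q%:R else 0.
Proof.
have q0 : (0 < q)%N by apply: leq_ltn_trans (ltn_ord j).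
have hp := @omega_prim R q q0.
have -> : (j == j') = (w^-1 ^+ j * w ^+ j' == 1).
  rewrite -(inj_eq (mulfI (expf_neq0 j w_neq0))) mulrA -exprMn mulfV ?w_neq0 //.
  rewrite expr1n mul1r mulr1 eq_sym (eq_prim_root_expr hp) !modn_small //.
rewrite -geo_sum; last first.
  by rewrite exprMn -!exprM ![(_ * q)%N]mulnC !exprM exprVn (prim_expr_order hp)
    invr1 !expr1n mulr1.
by apply: eq_bigr => k _; rewrite exprMn -!exprM ![(k * _)%N]mulnC.
Qed.

Lemma orth' (k k' : 'I_q) :
  \sum_(j < q) w ^+ (k * j) * w^-1 ^+ (k' * j) = if k == k' then q%:R else 0.
Proof.
rewrite eq_sym -orth; apply: eq_bigr => j _.
by rewrite mulrC ![(_ * j)%N]mulnC.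
Qed.

End Fourier.



Section Fourier2.
Variable R : realType.
Local Notation C := R[i].
Variable q : nat.
Local Notation w := (omega R q).

Definition csym {m p} (X : 'I_q -> 'M[C]_(m, p)) :=
  forall k x y, X (trev k) x y = ((X k x y)^*)%C.

Lemma cjM (a b : C) : ((a * b)^*)%C = (a^*)%C * (b^*)%C.
Proof. exact: rmorphM. Qed.
Lemma cjD (a b : C) : ((a + b)^*)%C = (a^*)%C + (b^*)%C.
Proof. exact: rmorphD. Qed.
Lemma cjB (a b : C) : ((a - b)^*)%C = (a^*)%C - (b^*)%C.
Proof. exact: rmorphB. Qed.
Lemma cjV (a : C) : ((a^-1)^*)%C = ((a^*)%C)^-1.
Proof. exact: fmorphV. Qed.
Lemma cj0 : ((0 : C)^*)%C = 0.
Proof. exact: rmorph0. Qed.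
Lemma cjS I (r : seq I) (P : pred I) (f : I -> C) :
  ((\sum_(i <- r | P i) f i)^*)%C = \sum_(i <- r | P i) ((f i)^*)%C.
Proof. exact: rmorph_sum. Qed.

Lemma qC_neq0 (k : 'I_q) : (q%:R : C) != 0.
Proof. by rewrite pnatr_eq0 -lt0n; apply: leq_ltn_trans (ltn_ord k). Qed.

Lemma sum_delta (f : 'I_q -> C) j :
  \sum_(j' < q) (if j == j' then q%:R else 0) * f j' = q%:R * f j.
Proof.
rewrite (bigD1 j) //= eqxx big1 ?addr0 // => i /negbTE; rewrite eq_sym => ->.
by rewrite mul0r.
Qed.

Lemma fslice_csym m p (A : tensor R m p q) : csym (fslice A).
Proof.
move=> k x y; rewrite !fsliceE cjS; apply: eq_bigr => j _.
by rewrite cjM conjc_real conj_wX w_trev.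
Qed.

Lemma of_fourier_ext m p (X Y : 'I_q -> 'M[C]_(m, p)) :
  (forall k, X k = Y k) -> of_fourier X = of_fourier Y.
Proof.
move=> h; apply/ffunP => j; apply/matrixP => x y; rewrite !of_fourierE.
by congr (complex.Re (_ * _)); apply: eq_bigr => k _; rewrite h.
Qed.

Lemma tensor_inv m p (A : tensor R m p q) : of_fourier (fslice A) = A.
Proof.
apply/ffunP => j; apply/matrixP => x y; rewrite of_fourierE.
under eq_bigr do rewrite fsliceE mulr_sumr.
rewrite exchange_big /=.
under eq_bigr do (under eq_bigr do rewrite mulrA; rewrite -mulr_suml orth).
by rewrite sum_delta mulrA mulVf ?qC_neq0 // mul1r.
Qed.

Lemma tensor_eq m p (A B : tensor R m p q) :
  (forall k, fslice A k = fslice B k) -> A = B.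
Proof. by move=> h; rewrite -(@tensor_inv m p A) -(@tensor_inv m p B); apply: of_fourier_ext. Qed.

Lemma of_fourier_inv m p (X : 'I_q -> 'M[C]_(m, p)) :
  csym X -> forall k, fslice (of_fourier X) k = X k.
Proof.
move=> hX k; apply/matrixP => x y; rewrite fsliceE.
pose Y j := (q%:R)^-1 * \sum_(k < q) w^-1 ^+ (k * j) * X k x y.
have hY : forall j, ((Y j)^*)%C = Y j.
  move=> j; rewrite /Y cjM cjV conjc_nat cjS; congr (_ * _).
  rewrite (reindex_inj (@trev_inj q)) /=; apply: eq_bigr => i _.
  by rewrite cjM conj_wVX -hX w_trev trev_inv.
have hR : forall j, (complex.Re (Y j))%:C%C = Y j.
  by move=> j; rewrite ReJ_add hY; field.
under eq_bigr do rewrite of_fourierE -/(Y _) hR /Y mulrCA mulr_sumr.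
rewrite -mulr_sumr exchange_big /=.
under eq_bigr do (under eq_bigr do rewrite mulrA; rewrite -mulr_suml orth').
by rewrite sum_delta mulrA mulVf ?qC_neq0 // mul1r.
Qed.

End Fourier2.



Section Fourier3.
Variable R : realType.
Local Notation C := R[i].
Variable q : nat.
Local Notation w := (omega R q).
Local Notation F := (@fslice R _ _ q).
Local Notation csym := (@csym R q _ _).

Lemma cjMn (a : C) b : ((a *+ b)^*)%C = (a^*)%C *+ b.
Proof. exact: rmorphMn. Qed.

Lemma csym_mul m n p (X : 'I_q -> 'M[C]_(m, n)) (Y : 'I_q -> 'M[C]_(n, p)) :
  csym X -> csym Y -> csym (fun k => X k *m Y k).
Proof.
move=> hX hY k x y; rewrite !mxE cjS; apply: eq_bigr => l _.
by rewrite hX hY cjM.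
Qed.

Lemma csym_scalar (f : 'I_q -> C) :
  (forall k, f (trev k) = ((f k)^*)%C) -> csym (fun k => (f k)%:M : 'M_1).
Proof. by move=> h k x y; rewrite !mxE h cjMn. Qed.

Lemma F_tprod m n p (A : tensor R m n q) (B : tensor R n p q) k :
  F (tprod A B) k = F A k *m F B k.
Proof.
by rewrite /tprod of_fourier_inv //; apply: csym_mul; apply: fslice_csym.
Qed.

Lemma F_add m p (A B : tensor R m p q) k : F (A + B) k = F A k + F B k.
Proof.
apply/matrixP => x y; rewrite !mxE !fsliceE -big_split /=.
by apply: eq_bigr => j _; rewrite !ffunE !mxE rmorphD mulrDr.
Qed.

Lemma F_opp m p (A : tensor R m p q) k : F (- A) k = - F A k.
Proof.
apply/matrixP => x y; rewrite !mxE !fsliceE -sumrN.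
by apply: eq_bigr => j _; rewrite !ffunE !mxE rmorphN mulrN.
Qed.

Lemma F_sub m p (A B : tensor R m p q) k : F (A - B) k = F A k - F B k.
Proof. by rewrite F_add F_opp. Qed.

Lemma F_zero m p k : F (0 : tensor R m p q) k = 0.
Proof.
apply/matrixP => x y; rewrite !mxE !fsliceE big1 // => j _.
by rewrite !ffunE !mxE mulr0.
Qed.

Lemma F_sum m p I (r : seq I) (P : pred I) (G : I -> tensor R m p q) k :
  F (\sum_(i <- r | P i) G i) k = \sum_(i <- r | P i) F (G i) k.
Proof.
elim/big_rec2: _ => [|i y t _ <-]; first exact: F_zero.
by rewrite F_add.
Qed.

Lemma F_ttube m p (B : tensor R m p q) x y k :
  F (ttube B x y) k 0 0 = F B k x y.
Proof.
rewrite !fsliceE; apply: eq_bigr => j _; by rewrite ffunE !mxE mulr1n.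
Qed.

Lemma F_tscale m p (a : tube R q) (B : tensor R m p q) k :
  F (tscale a B) k = F a k 0 0 *: F B k.
Proof.
apply/matrixP => x y; rewrite [RHS]mxE -(@F_ttube m p B x y k).
have -> : F a k 0 0 * F (ttube B x y) k 0 0 = F (tprod a (ttube B x y)) k 0 0.
  by rewrite F_tprod mxE big_ord1.
rewrite !fsliceE; apply: eq_bigr => j _; by rewrite ffunE !mxE.
Qed.


Definition cinner {m p} (M N : 'M[C]_(m, p)) : C :=
  \sum_(i < m) \sum_(j < p) ((M i j)^*)%C * N i j.

Lemma F_ttr m p (X : tensor R m p q) k x y :
  F (ttr X) k x y = ((F X k y x)^*)%C.
Proof.
rewrite !fsliceE cjS (reindex_inj (@trev_inj q)) /=; apply: eq_bigr => j _.
by rewrite ffunE trev_inv !mxE cjM conjc_real mulnC w_trev conj_wX mulnC.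
Qed.

Lemma F_ttrace n (A : tensor R n n q) k : F (ttrace A) k = (\tr (F A k))%:M.
Proof.
rewrite /ttrace of_fourier_inv //; apply: csym_scalar => k'.
rewrite /mxtrace cjS; apply: eq_bigr => i _; exact: fslice_csym.
Qed.

Lemma F_tinner n s (X Y : tensor R n s q) k :
  F (tinner X Y) k = (cinner (F X k) (F Y k))%:M.
Proof.
rewrite /tinner F_ttrace F_tprod /cinner /mxtrace exchange_big /=; congr (_%:M).
by apply: eq_bigr => i _; rewrite mxE; apply: eq_bigr => j _; rewrite F_ttr.
Qed.

Lemma F_tid n k : F (tid R n q) k = 1%:M.
Proof.
have q0 : (0 < q)%N by apply: leq_ltn_trans (ltn_ord k).
apply/matrixP => x y; rewrite fsliceE (bigD1 (Ordinal q0)) //= big1 ?addr0.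
  by rewrite ffunE /= muln0 expr0 mul1r !mxE; case: (x == y).
move=> j hj; rewrite ffunE; case: ifP => [/eqP h|_]; last by rewrite mxE mulr0.
by move: hj; have -> : j = Ordinal q0 by apply: val_inj.
Qed.

Lemma F_te k : F (te R q) k = 1.
Proof.
have q0 : (0 < q)%N by apply: leq_ltn_trans (ltn_ord k).
apply/matrixP => x y; rewrite fsliceE (bigD1 (Ordinal q0)) //= big1 ?addr0.
  by rewrite ffunE /= muln0 expr0 mul1r !mxE; case: (x == y).
move=> j hj; rewrite ffunE; case: ifP => [/eqP h|_]; last by rewrite mxE mulr0.
by move: hj; have -> : j = Ordinal q0 by apply: val_inj.
Qed.

Lemma Re_cj (z : C) : complex.Re (z^*)%C = complex.Re z. Proof. by case: z. Qed.
Lemma Im_cj (z : C) : complex.Im (z^*)%C = - complex.Im z. Proof. by case: z. Qed.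

Lemma fnorm_trev m p (W : tensor R m p q) k : fnorm (F W (trev k)) = fnorm (F W k).
Proof.
rewrite /fnorm; congr Num.sqrt; apply: eq_bigr => i _; apply: eq_bigr => j _.
by rewrite fslice_csym Re_cj Im_cj sqrrN.
Qed.

Lemma F_normQ m p (W : tensor R m p q) k :
  F (normQ W) k = ((fnorm (F W k))^-1)%:C%C *: F W k.
Proof.
rewrite /normQ of_fourier_inv // => k' x y.
by rewrite !mxE fnorm_trev fslice_csym cjM conjc_real.
Qed.

Lemma F_normA m p (W : tensor R m p q) k :
  F (normA W) k = ((fnorm (F W k))%:C%C)%:M.
Proof.
rewrite /normA of_fourier_inv //; apply: csym_scalar => k'.
by rewrite fnorm_trev conjc_real.
Qed.

Definition tubeF (f : 'I_q -> C) : tube R q := of_fourier (fun k => (f k)%:M).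

Lemma F_tubeF f : (forall k, f (trev k) = ((f k)^*)%C) ->
  forall k, F (tubeF f) k = (f k)%:M.
Proof. by move=> h k; rewrite /tubeF of_fourier_inv //; apply: csym_scalar. Qed.

End Fourier3.



Section Alg.
Variable R : realType.
Local Notation C := R[i].
Variable q : nat.
Local Notation T m p := (tensor R m p q).

Fact fl_key : unit. Proof. exact: tt. Qed.
Definition FL {m p} : T m p -> 'I_q -> 'M[C]_(m, p) :=
  locked_with fl_key (@fslice R m p q).
Lemma FLE m p : @fslice R m p q = @FL m p. Proof. by rewrite /FL unlock. Qed.

Fact tp_key : unit. Proof. exact: tt. Qed.
Definition TP {m n p} : T m n -> T n p -> T m p := locked_with tp_key (@tprod R m n p q).
Lemma TPE m n p : @tprod R m n p q = @TP m n p. Proof. by rewrite /TP unlock. Qed.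

Fact ts_key : unit. Proof. exact: tt. Qed.
Definition TS {m p} : tube R q -> T m p -> T m p := locked_with ts_key (@tscale R m p q).
Lemma TSE m p : @tscale R m p q = @TS m p. Proof. by rewrite /TS unlock. Qed.

Fact ti_key : unit. Proof. exact: tt. Qed.
Definition TI {n s} : T n s -> T n s -> tube R q := locked_with ti_key (@tinner R n s q).
Lemma TIE n s : @tinner R n s q = @TI n s. Proof. by rewrite /TI unlock. Qed.

Fact nq_key : unit. Proof. exact: tt. Qed.
Definition NQ {m p} : T m p -> T m p := locked_with nq_key (@normQ R m p q).
Lemma NQE m p : @normQ R m p q = @NQ m p. Proof. by rewrite /NQ unlock. Qed.

Fact na_key : unit. Proof. exact: tt. Qed.
Definition NA {m p} : T m p -> tube R q := locked_with na_key (@normA R m p q).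
Lemma NAE m p : @normA R m p q = @NA m p. Proof. by rewrite /NA unlock. Qed.

Fact tid_key : unit. Proof. exact: tt. Qed.
Definition TID n : T n n := locked_with tid_key (tid R n q).
Lemma TIDE n : tid R n q = TID n. Proof. by rewrite /TID unlock. Qed.

Fact te_key : unit. Proof. exact: tt. Qed.
Definition TE : tube R q := locked_with te_key (te R q).
Lemma TEE : te R q = TE. Proof. by rewrite /TE unlock. Qed.

Fact tf_key : unit. Proof. exact: tt. Qed.
Definition TF (f : 'I_q -> C) : tube R q := locked_with tf_key (@tubeF R q f).
Lemma TFE f : @tubeF R q f = TF f. Proof. by rewrite /TF unlock. Qed.

Lemma tensor_eqL m p (A B : T m p) : (forall k, FL A k = FL B k) -> A = B.
Proof. by rewrite -FLE; apply: tensor_eq. Qed.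

Lemma FL_TP m n p (A : T m n) (B : T n p) k : FL (TP A B) k = FL A k *m FL B k.
Proof. by rewrite -TPE -!FLE; apply: F_tprod. Qed.
Lemma FL_add m p (A B : T m p) k : FL (A + B) k = FL A k + FL B k.
Proof. by rewrite -!FLE; apply: F_add. Qed.
Lemma FL_sub m p (A B : T m p) k : FL (A - B) k = FL A k - FL B k.
Proof. by rewrite -!FLE; apply: F_sub. Qed.
Lemma FL_zero m p k : FL (0 : T m p) k = 0.
Proof. by rewrite -!FLE; apply: F_zero. Qed.
Lemma FL_sum m p I (r : seq I) (P : pred I) (G : I -> T m p) k :
  FL (\sum_(i <- r | P i) G i) k = \sum_(i <- r | P i) FL (G i) k.
Proof. by rewrite -!FLE; apply: F_sum. Qed.
Lemma FL_TS m p a (B : T m p) k : FL (TS a B) k = FL a k 0 0 *: FL B k.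
Proof. by rewrite -TSE -!FLE; apply: F_tscale. Qed.
Lemma FL_TI n s (X Y : T n s) k : FL (TI X Y) k = (@cinner R _ _ (FL X k) (FL Y k))%:M.
Proof. by rewrite -TIE -!FLE; apply: F_tinner. Qed.
Lemma FL_TID n k : FL (TID n) k = 1%:M.
Proof. by rewrite -TIDE -!FLE; apply: F_tid. Qed.
Lemma FL_TE k : FL TE k = 1.
Proof. by rewrite -TEE -!FLE; apply: F_te. Qed.
Lemma FL_NQ m p (W : T m p) k :
  FL (NQ W) k = ((fnorm (FL W k))^-1)%:C%C *: FL W k.
Proof. by rewrite -NQE -!FLE; apply: F_normQ. Qed.
Lemma FL_NA m p (W : T m p) k : FL (NA W) k = ((fnorm (FL W k))%:C%C)%:M.
Proof. by rewrite -NAE -!FLE; apply: F_normA. Qed.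
Lemma FL_TF f : (forall k, f (trev k) = ((f k)^*)%C) -> forall k, FL (TF f) k = (f k)%:M.
Proof. by rewrite -TFE -!FLE; apply: F_tubeF. Qed.
Lemma fnorm_trevL m p (W : T m p) k : fnorm (FL W (trev k)) = fnorm (FL W k).
Proof. by rewrite -!FLE; apply: fnorm_trev. Qed.

Lemma FL_tube_mul (a b : tube R q) k : FL (TP a b) k 0 0 = FL a k 0 0 * FL b k 0 0.
Proof. by rewrite FL_TP mxE big_ord1. Qed.

Lemma tprodA m n p r (A : T m n) (B : T n p) (D : T p r) :
  TP A (TP B D) = TP (TP A B) D.
Proof. by apply: tensor_eqL => k; rewrite !FL_TP mulmxA. Qed.

Lemma tprod_tscale m n p (A : T m n) a (B : T n p) :
  TP A (TS a B) = TS a (TP A B).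
Proof. by apply: tensor_eqL => k; rewrite FL_TP !FL_TS FL_TP scalemxAr. Qed.

Lemma tprodD m n p (A : T m n) (B D : T n p) :
  TP A (B + D) = TP A B + TP A D.
Proof. by apply: tensor_eqL => k; rewrite FL_TP !FL_add !FL_TP mulmxDr. Qed.

Lemma tprod0 m n p (A : T m n) : TP A (0 : T n p) = 0.
Proof. by apply: tensor_eqL => k; rewrite FL_TP !FL_zero mulmx0. Qed.

Lemma tprod_sum m n p (A : T m n) I (r : seq I) (P : pred I) (G : I -> T n p) :
  TP A (\sum_(i <- r | P i) G i) = \sum_(i <- r | P i) TP A (G i).
Proof.
elim/big_rec2: _ => [|i y t _ <-]; first exact: tprod0.
by rewrite tprodD.
Qed.

Lemma tprod_id n p (B : T n p) : TP (TID n) B = B.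
Proof. by apply: tensor_eqL => k; rewrite FL_TP FL_TID mul1mx. Qed.

Lemma tscaleDr m p a (B D : T m p) : TS a (B + D) = TS a B + TS a D.
Proof. by apply: tensor_eqL => k; rewrite FL_TS !FL_add !FL_TS scalerDr. Qed.

Lemma tscaleBr m p a (B D : T m p) : TS a (B - D) = TS a B - TS a D.
Proof. by apply: tensor_eqL => k; rewrite FL_TS !FL_sub !FL_TS scalerBr. Qed.

Lemma tscale0r m p a : TS a (0 : T m p) = 0.
Proof. by apply: tensor_eqL => k; rewrite FL_TS !FL_zero scaler0. Qed.

Lemma tscaleDl m p a b (B : T m p) : TS (a + b) B = TS a B + TS b B.
Proof. by apply: tensor_eqL => k; rewrite FL_add !FL_TS FL_add mxE scalerDl. Qed.

Lemma tscale0l m p (B : T m p) : TS 0 B = 0.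
Proof. by apply: tensor_eqL => k; rewrite FL_TS !FL_zero mxE scale0r. Qed.

Lemma tscaleA m p a b (B : T m p) : TS a (TS b B) = TS (TP a b) B.
Proof. by apply: tensor_eqL => k; rewrite !FL_TS FL_tube_mul scalerA. Qed.

Lemma tscale_te m p (B : T m p) : TS TE B = B.
Proof. by apply: tensor_eqL => k; rewrite FL_TS FL_TE mxE /= scale1r. Qed.

Lemma tscale_sum m p a I (r : seq I) (P : pred I) (G : I -> T m p) :
  TS a (\sum_(i <- r | P i) G i) = \sum_(i <- r | P i) TS a (G i).
Proof.
elim/big_rec2: _ => [|i y t _ <-]; first exact: tscale0r.
by rewrite tscaleDr.
Qed.

Definition ninv {m p} (W : T m p) : tube R q :=
  TF (fun k => ((fnorm (FL W k))^-1)%:C%C).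

Lemma normQ_scale m p (W : T m p) : NQ W = TS (ninv W) W.
Proof.
apply: tensor_eqL => k; rewrite FL_NQ FL_TS /ninv FL_TF ?mxE //.
by move=> k'; rewrite fnorm_trevL conjc_real.
Qed.

Lemma normA_scale m p (W : T m p) :
  (forall k, fnorm (FL W k) != 0) -> W = TS (NA W) (NQ W).
Proof.
move=> nb; apply: tensor_eqL => k; rewrite FL_TS FL_NA FL_NQ mxE /= mulr1n.
by rewrite scalerA -rmorphM mulfV ?nb // scale1r.
Qed.

End Alg.



Section Span.
Variable R : realType.
Local Notation C := R[i].
Variable q : nat.
Local Notation T m p := (tensor R m p q).
Local Notation TP := (@TP R q _ _ _).
Local Notation TS := (@TS R q _ _).
Local Notation TE := (@TE R q).

Lemma tscaleBl m p a b (B : T m p) : TS (a - b) B = TS a B - TS b B.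
Proof. by apply: tensor_eqL => k; rewrite FL_sub !FL_TS FL_sub !mxE scalerBl. Qed.

Definition tspan {m p} (P : nat -> T m p) (j : nat) (X : T m p) :=
  exists b : nat -> tube R q, X = \sum_(1 <= i < j.+1) TS (b i) (P i).

Section S.
Variables (m p : nat) (P : nat -> T m p).

Lemma span0 j : tspan P j 0.
Proof.
exists (fun _ => 0); rewrite big1 // => i _; exact: tscale0l.
Qed.

Lemma spanD j X Y : tspan P j X -> tspan P j Y -> tspan P j (X + Y).
Proof.
move=> [b ->] [c ->]; exists (fun i => b i + c i); rewrite -big_split /=.
by apply: eq_bigr => i _; rewrite tscaleDl.
Qed.

Lemma spanB j X Y : tspan P j X -> tspan P j Y -> tspan P j (X - Y).
Proof.
move=> [b ->] [c ->]; exists (fun i => b i - c i); rewrite -sumrB /=.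
by apply: eq_bigr => i _; rewrite tscaleBl.
Qed.

Lemma spanZ j a X : tspan P j X -> tspan P j (TS a X).
Proof.
move=> [b ->]; exists (fun i => TP a (b i)); rewrite tscale_sum.
by apply: eq_bigr => i _; rewrite tscaleA.
Qed.

Lemma span_mono i j X : (i <= j)%N -> tspan P i X -> tspan P j X.
Proof.
move=> ij [b ->]; exists (fun l => if (l <= i)%N then b l else 0).
rewrite [RHS](@big_cat_nat _ _ _ i.+1) //=.
rewrite [X in _ = _ + X]big1_seq ?addr0 => [|l]; last first.
  rewrite /= mem_index_iota => /andP [h _].
  by rewrite leqNgt h /=; exact: tscale0l.
by apply: eq_big_nat => l /andP [_ h]; rewrite ltnS in h; rewrite h.
Qed.

Lemma span_gen i j : (1 <= i <= j)%N -> tspan P j (P i).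
Proof.
move=> /andP [i1 ij]; apply: (@span_mono i j (P i) ij).
exists (fun l => if l == i then TE else 0).
rewrite big_nat_recr //= eqxx tscale_te big1_seq ?add0r // => l.
rewrite /= mem_index_iota => /andP [_ h]; rewrite (ltn_eqF h); exact: tscale0l.
Qed.

Lemma span_sum j (Y : nat -> T m p) a b :
  (forall i, (a <= i < b)%N -> tspan P j (Y i)) -> tspan P j (\sum_(a <= i < b) Y i).
Proof.
move=> h; rewrite big_nat_cond; apply: (big_ind (tspan P j)).
- exact: span0.
- exact: spanD.
by move=> i /andP [hi _]; apply: h.
Qed.
End S.

Lemma span_trans m p (P Q : nat -> T m p) j l X :
  (forall i, (1 <= i <= j)%N -> tspan Q l (P i)) -> tspan P j X -> tspan Q l X.
Proof.
move=> h [b ->]; apply: span_sum => i hi; apply: spanZ; apply: h.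
by rewrite ltnS in hi.
Qed.

Definition Kf {n s} (A : T n n) (V : T n s) (i : nat) : T n s := TP (tpow A i.-1) V.

Lemma tpowS n (A : T n n) i : tpow A i.+1 = TP A (tpow A i).
Proof. by rewrite /= TPE. Qed.

Lemma span_KA n s (A : T n n) (V : T n s) j X :
  tspan (Kf A V) j X -> tspan (Kf A V) j.+1 (TP A X).
Proof.
move=> [b ->]; rewrite tprod_sum; apply: span_sum => i /andP [i1 ij].
rewrite tprod_tscale; apply: spanZ.
have -> : TP A (Kf A V i) = Kf A V i.+1.
  by rewrite /Kf tprodA -tpowS prednK.
by apply: span_gen; rewrite ltnS ij andbT.
Qed.

End Span.



Section Cinner.
Variable R : realType.
Local Notation C := R[i].
Variables n s : nat.
Local Notation M := 'M[C]_(n, s).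
Local Notation ci := (@cinner R n s).

Lemma cinnerDr (X Y Z : M) : ci X (Y + Z) = ci X Y + ci X Z.
Proof.
rewrite /cinner -big_split; apply: eq_bigr => i _; rewrite -big_split.
by apply: eq_bigr => j _; rewrite mxE mulrDr.
Qed.

Lemma cinnerBr (X Y Z : M) : ci X (Y - Z) = ci X Y - ci X Z.
Proof.
rewrite /cinner -sumrB; apply: eq_bigr => i _; rewrite -sumrB.
by apply: eq_bigr => j _; rewrite !mxE mulrBr.
Qed.

Lemma cinnerZr (X Y : M) a : ci X (a *: Y) = a * ci X Y.
Proof.
rewrite /cinner mulr_sumr; apply: eq_bigr => i _; rewrite mulr_sumr.
by apply: eq_bigr => j _; rewrite mxE mulrCA.
Qed.

Lemma cinnerZl (X Y : M) a : ci (a *: X) Y = (a^*)%C * ci X Y.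
Proof.
rewrite /cinner mulr_sumr; apply: eq_bigr => i _; rewrite mulr_sumr.
by apply: eq_bigr => j _; rewrite mxE cjM mulrA.
Qed.

Lemma cinner0r (X : M) : ci X 0 = 0.
Proof. by rewrite /cinner big1 // => i _; rewrite big1 // => j _; rewrite mxE mulr0. Qed.

Lemma cinner_sumr (X : M) I (r : seq I) (P : pred I) (G : I -> M) :
  ci X (\sum_(i <- r | P i) G i) = \sum_(i <- r | P i) ci X (G i).
Proof.
elim/big_rec2: _ => [|i y t _ <-]; first exact: cinner0r.
by rewrite cinnerDr.
Qed.

Lemma cinnerC (X Y : M) : ci Y X = ((ci X Y)^*)%C.
Proof.
rewrite /cinner cjS; apply: eq_bigr => i _; rewrite cjS.
by apply: eq_bigr => j _; rewrite cjM conjcK mulrC.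
Qed.

Lemma cj_mul_self (z : C) : (z^*)%C * z = ((complex.Re z) ^+ 2 + (complex.Im z) ^+ 2)%:C%C.
Proof.
case: z => a b; apply/eqP; rewrite eq_complex /=; apply/andP; split; apply/eqP; ring.
Qed.

Lemma cinner_self (X : M) : ci X X = ((fnorm X) ^+ 2)%:C%C.
Proof.
rewrite /fnorm sqr_sqrtr; last first.
  by apply: sumr_ge0 => i _; apply: sumr_ge0 => j _; apply: addr_ge0; apply: sqr_ge0.
rewrite /cinner rmorph_sum; apply: eq_bigr => i _; rewrite rmorph_sum.
by apply: eq_bigr => j _; rewrite cj_mul_self.
Qed.

Lemma cinner_normed (X : M) : fnorm X != 0 ->
  ci (((fnorm X)^-1)%:C%C *: X) (((fnorm X)^-1)%:C%C *: X) = 1.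
Proof.
move=> h; rewrite cinnerZl cinnerZr conjc_real cinner_self -!rmorphM /=.
by rewrite mulrA -expr2 -exprMn mulVf // expr1n.
Qed.


Lemma orth_arnoldi (m : nat) (v : nat -> M) (wv : nat -> nat -> M)
    (h : nat -> nat -> C) (al : nat -> C) :
  ci (v 1%N) (v 1%N) = 1 ->
  (forall j i, (1 <= j <= m)%N -> (1 <= i <= j)%N ->
      h i j = ci (v i) (wv j i.-1) /\ wv j i = wv j i.-1 - h i j *: v i) ->
  (forall j, (1 <= j <= m)%N -> v j.+1 = al j *: wv j j /\ ci (v j.+1) (v j.+1) = 1) ->
  forall i l, (1 <= i <= m)%N -> (1 <= l <= m)%N -> ci (v i) (v l) = (i == l)%:R.
Proof.
move=> h1 hw hv.
suff O : forall j, (j <= m)%N -> forall i l, (1 <= i <= j)%N -> (1 <= l <= j)%N ->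
    ci (v i) (v l) = (i == l)%:R.
  by move=> i l hi hl; apply: (O m).
elim => [|j IH] hjm i l; first by case/andP => a b; move: (leq_trans a b).
case: (posnP j) => [j0|jp].
  subst j => /andP [i1 i2] /andP [l1 l2].
  have -> : i = 1%N by apply/eqP; rewrite eqn_leq i1 i2.
  by have -> : l = 1%N by apply/eqP; rewrite eqn_leq l1 l2.
have IH' := IH (ltnW hjm).
have hjm' : (1 <= j <= m)%N by rewrite jp (ltnW hjm).
have W0 : forall i, (i <= j)%N -> forall l, (1 <= l <= i)%N -> ci (v l) (wv j i) = 0.
  elim => [|i' IHi] hij l'; first by case/andP => a b; move: (leq_trans a b).
  move=> /andP [l1 l2].
  have [hh hw'] := hw j i'.+1 hjm' hij.
  rewrite hw' /= cinnerBr cinnerZr.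
  rewrite leq_eqVlt in l2; case/orP: l2 => [/eqP El|l2].
    subst l'; rewrite -hh IH' ?eqxx ?hij // mulr1 subrr //.
  rewrite ltnS in l2.
  rewrite IHi ?(ltnW hij) ?l1 // IH' ?l1 ?(leq_trans l2 (ltnW hij)) //.
  by rewrite ltn_eqF // mulr0 subrr.
have [hvj hnj] := hv j hjm'.
have key : forall l, (1 <= l <= j)%N -> ci (v l) (v j.+1) = 0.
  by move=> l' hl; rewrite hvj cinnerZr W0 // mulr0.
move=> /andP [i1 ij] /andP [l1 lj].
rewrite leq_eqVlt in ij; rewrite leq_eqVlt in lj.
case/orP: ij => [/eqP -> | ij]; case/orP: lj => [/eqP -> | lj].
- by rewrite hnj eqxx.
- by rewrite ltnS in lj; rewrite cinnerC key ?l1 // cj0 gtn_eqF.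
- by rewrite ltnS in ij; rewrite key ?i1 // ltn_eqF.
by rewrite ltnS in ij lj; rewrite IH' ?i1 ?l1.
Qed.

End Cinner.



Section Main.
Variable R : realType.
Local Notation C := R[i].
Variable q : nat.
Local Notation T m p := (tensor R m p q).
Local Notation FL := (@FL R q _ _).
Local Notation TP := (@TP R q _ _ _).
Local Notation TS := (@TS R q _ _).
Local Notation TI := (@TI R q _ _).
Local Notation NQ := (@NQ R q _ _).
Local Notation NA := (@NA R q _ _).
Local Notation TE := (@TE R q).
Local Notation tspan := (@tspan R q _ _).
Local Notation ci := (@cinner R _ _).

Variables (n s m : nat) (A : T n n) (V : T n s) (Vs : nat -> T n s)
  (H : nat -> nat -> tube R q) (r : tube R q) (W : nat -> nat -> T n s).

Hypotheses (nbV : forall k, fnorm (FL V k) != 0) (V1 : Vs 1%N = NQ V) (rr : r = NA V)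
  (hW0 : forall j, (1 <= j <= m)%N -> W j 0%N = TP A (Vs j))
  (hWi : forall j i, (1 <= j <= m)%N -> (1 <= i <= j)%N ->
          H i j = TI (Vs i) (W j i.-1) /\ W j i = W j i.-1 - TS (H i j) (Vs i))
  (hWn : forall j, (1 <= j <= m)%N ->
          [/\ forall k, fnorm (FL (W j j) k) != 0, Vs j.+1 = NQ (W j j)
            & H j.+1 j = NA (W j j)]).

Lemma ON k : forall i l, (1 <= i <= m)%N -> (1 <= l <= m)%N ->
  ci (FL (Vs i) k) (FL (Vs l) k) = (i == l)%:R.
Proof.
apply: (@orth_arnoldi R n s m (fun i => FL (Vs i) k) (fun j i => FL (W j i) k)
   (fun i j => FL (H i j) k 0 0) (fun j => ((fnorm (FL (W j j) k))^-1)%:C%C)).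
- by rewrite V1 FL_NQ cinner_normed.
- move=> j i hj hi; have [-> ->] := hWi j i hj hi.
  by rewrite FL_sub FL_TS FL_TI mxE /= mulr1n.
- move=> j hj; have [nb -> _] := hWn j hj.
  by rewrite FL_NQ cinner_normed.
Qed.


Local Notation K := (@Kf R q _ _ A V).

Lemma part_a i l : (1 <= i <= m)%N -> (1 <= l <= m)%N ->
  TI (Vs i) (Vs l) = if i == l then TE else 0.
Proof.
move=> hi hl; apply: tensor_eqL => k; rewrite FL_TI ON //.
by case: (i == l); rewrite ?FL_TE ?FL_zero; apply/matrixP => x y; rewrite !ord1 !mxE.
Qed.

Lemma K1 : K 1%N = V.
Proof. by rewrite /Kf /= TIDE tprod_id. Qed.

Lemma part_b : forall j, (1 <= j <= m)%N -> tspan K j (Vs j).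
Proof.
suff S : forall j, (j <= m)%N -> forall i, (1 <= i <= j)%N -> tspan K i (Vs i).
  by move=> j /andP [j1 jm]; apply: (S j jm); rewrite j1 leqnn.
elim => [|j IH] jm i; first by case/andP => a b; move: (leq_trans a b).
move=> /andP [i1]; rewrite leq_eqVlt => /orP [/eqP ->|]; last first.
  by rewrite ltnS => ij; apply: IH (ltnW jm) _ _; rewrite i1.
case: (posnP j) => [j0|jp].
  subst j; rewrite V1 normQ_scale; apply: spanZ; rewrite -[X in tspan _ _ X]K1.
  exact: span_gen.
have hj : (1 <= j <= m)%N by rewrite jp (ltnW jm).
have [_ -> _] := hWn j hj.
rewrite normQ_scale; apply: spanZ.
suff SW : forall i, (i <= j)%N -> tspan K j.+1 (W j i) by apply: SW.
elim => [|i' IHi] hij.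
  rewrite hW0 //; apply: span_KA; apply: IH (ltnW jm) _ _; by rewrite jp leqnn.
have [_ ->] := hWi j i'.+1 hj hij.
apply: spanB; first exact: IHi (ltnW hij).
apply: spanZ; apply: (@span_mono _ _ _ _ _ i'.+1); first by rewrite ltnW // ltnS.
by apply: IH (ltnW jm) _ _; rewrite hij.
Qed.

Lemma AV l : (1 <= l <= m)%N -> tspan Vs l.+1 (TP A (Vs l)).
Proof.
move=> hl; have [nb hV hH] := hWn l hl.
have D : forall i, (i <= l)%N -> tspan Vs l (W l 0 - W l i).
  elim => [|i IHi] hi; first by rewrite subrr; apply: span0.
  have [_ ->] := hWi l i.+1 hl hi.
  rewrite /= opprD opprK addrA; apply: spanD; first exact: IHi (ltnW hi).
  by apply: spanZ; apply: span_gen; rewrite hi.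
rewrite -hW0 // -(subrK (W l l) (W l 0)); apply: spanD.
  by apply: (@span_mono _ _ _ _ _ l); [exact: leqnSn | exact: D].
rewrite (@normA_scale R q _ _ _ nb) -hV -hH; apply: spanZ; apply: span_gen.
by rewrite ltnS leqnn.
Qed.

Lemma VsA i X : (i < m)%N -> tspan Vs i X -> tspan Vs i.+1 (TP A X).
Proof.
move=> im [b ->]; rewrite tprod_sum; apply: span_sum => l /andP [l1 li].
rewrite tprod_tscale; apply: spanZ.
apply: (@span_mono _ _ _ _ _ l.+1); first by [].
by apply: AV; rewrite l1 /= (leq_trans _ (ltnW im)) // -ltnS.
Qed.

Lemma part_c i : (1 <= i <= m)%N -> tspan Vs i (K i).
Proof.
elim: i => [|i IH] //; move=> /andP [_ im].
case: (posnP i) => [i0|ip].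
  subst i; rewrite K1 (@normA_scale R q _ _ _ nbV) -V1 -rr; apply: spanZ.
  exact: span_gen.
have -> : K i.+1 = TP A (K i) by rewrite /Kf tprodA -tpowS prednK.
by apply: VsA => //; apply: IH; rewrite ip ltnW.
Qed.

Lemma part_d (b : nat -> tube R q) :
  \sum_(1 <= i < m.+1) TS (b i) (Vs i) = 0 ->
  forall i, (1 <= i <= m)%N -> b i = 0.
Proof.
move=> hs i hi; apply: tensor_eqL => k; rewrite FL_zero.
have := congr1 (fun X => ci (FL (Vs i) k) (FL X k)) hs => /=.
rewrite FL_zero cinner0r FL_sum cinner_sumr.
rewrite (eq_big_seq (fun l => FL (b l) k 0 0 * (i == l)%:R)) => [|l]; last first.
  rewrite mem_index_iota => hl; rewrite FL_TS cinnerZr ON //.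
rewrite (bigD1_seq i) ?mem_index_iota ?iota_uniq //=.
rewrite eqxx mulr1 big1 ?addr0 => [h0|l hl]; last by rewrite eq_sym (negbTE hl) mulr0.
by apply/matrixP => x y; rewrite !ord1 mxE h0.
Qed.


Lemma main_locked :
  [/\ (forall i l, (1 <= i <= m)%N -> (1 <= l <= m)%N ->
        TI (Vs i) (Vs l) = if i == l then TE else 0),
      (forall j, (1 <= j <= m)%N -> tspan K m (Vs j)),
      (forall X, tspan K m X -> tspan Vs m X) &
      (forall b : nat -> tube R q,
         \sum_(1 <= i < m.+1) TS (b i) (Vs i) = 0 ->
         forall i, (1 <= i <= m)%N -> b i = 0)].
Proof.
split.
- exact: part_a.
- move=> j hj; apply: (@span_mono _ _ _ _ _ j); first by case/andP: hj.
  exact: part_b.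
- move=> X; apply: span_trans => i hi; apply: (@span_mono _ _ _ _ _ i).
    by case/andP: hi.
  exact: part_c.
exact: part_d.
Qed.

End Main.



Theorem proposition6 (R : realType) (n s n3 m : nat)
  (A : tensor R n n n3) (V : tensor R n s n3)
  (Vs : nat -> tensor R n s n3) (H : nat -> nat -> tube R n3) (r : tube R n3)
  (W : nat -> nat -> tensor R n s n3) :
  arnoldi_run m A V Vs H r W ->
  [/\ (* T-orthonormality *)
      (forall i j, (1 <= i <= m)%N -> (1 <= j <= m)%N ->
         tinner (Vs i) (Vs j) = (if i == j then te R n3 else to R n3)),
      (* each V_j lies in TK^g_m(A, V) *)
      (forall j, (1 <= j <= m)%N -> in_TKg m A V (Vs j)),
      (* V_1, ..., V_m span TK^g_m(A, V) over tubes *)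
      (forall X, in_TKg m A V X ->
         exists b : nat -> tube R n3, X = \sum_(1 <= i < m.+1) tscale (b i) (Vs i)) &
      (* V_1, ..., V_m are linearly independent over tubes *)
      (forall b : nat -> tube R n3,
         \sum_(1 <= i < m.+1) tscale (b i) (Vs i) = 0 ->
         forall i, (1 <= i <= m)%N -> b i = to R n3)].
Proof.
case=> [[nbV [V1 rr]] hW0 hWi hWn].
rewrite /no_breakdown FLE in nbV.
rewrite NQE in V1; rewrite NAE in rr; rewrite TPE in hW0.
rewrite TIE TSE in hWi.
rewrite /no_breakdown FLE NQE NAE in hWn.
have [Ma Mb Mc Md] := @main_locked R n3 n s m A V Vs H r W nbV V1 rr hW0 hWi hWn.
rewrite /in_TKg /to TIE TEE !TSE TPE; split.
- exact: Ma.
- exact: Mb.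
- exact: Mc.
- exact: Md.
Qed.
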